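(* (i) $\overline{\mathcal{M}\setminus\mathbb{R}}\cap\mathbb{R}\subset\mathcal{O}$; (ii) $\overline{\mathcal{N}\setminus\mathrm{Diag}(\mathbb{R})}\cap\mathrm{Diag}(\mathbb{R})\subset\mathrm{Diag}(\mathcal{O})$.
   Context: Let $\mathcal{B}=\{1+\sum_{n=1}^\infty a_n x^n : a_n\in\{-1,0,1\}\}$ (power series converging on the open unit disk $\mathbb{D}\subset\mathbb{C}$). Define $\mathcal{M}=\{z\in\mathbb{D}: \exists f\in\mathcal{B},\ f(z)=0\}$, $\mathcal{N}=\{(\gamma,\lambda)\in(-1,1)^2: \exists f\in\mathcal{B},\ f(\gamma)=f(\lambda)=0\}$, $\mathcal{O}=\{\lambda\in(-1,1): \exists f\in\mathcal{B},\ f(\lambda)=f'(\lambda)=0\}$. For $F\subset\mathbb{R}$, $\mathrm{Diag}(F)=\{(\lambda,\lambda):\lambda\in F\}$. Overlines denote closures (relative to $\mathbb{D}$, resp. $(-1,1)^2$). *)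

(* Defs.v *)
From Stdlib Require Import Reals ZArith.
From Coquelicot Require Import Coquelicot.
Open Scope R_scope.

(* An element f = 1 + sum_{n>=1} a_n x^n of the class B, encoded by its
   integer coefficient sequence a (a 0 = 1, a n in {-1,0,1} for n >= 1). *)
Definition inB (a : nat -> Z) : Prop :=
  a 0%nat = 1%Z /\
  forall n : nat, (1 <= n)%nat -> a n = (-1)%Z \/ a n = 0%Z \/ a n = 1%Z.

Definition fR (a : nat -> Z) (x : R) : R := PSeries (fun n => IZR (a n)) x.

Definition zeroC (a : nat -> Z) (z : C) : Prop :=
  is_series (V := C_NormedModule) (fun n : nat => RtoC (IZR (a n)) * pow_n (K := C_Ring) z n)%C (RtoC 0).

Definition zeroR (a : nat -> Z) (x : R) : Prop :=
  is_series (fun n : nat => IZR (a n) * x ^ n) 0.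

Definition inM (z : C) : Prop :=
  Cmod z < 1 /\ exists a, inB a /\ zeroC a z.

Definition inN (g l : R) : Prop :=
  -1 < g < 1 /\ -1 < l < 1 /\ exists a, inB a /\ zeroR a g /\ zeroR a l.

Definition inO (l : R) : Prop :=
  -1 < l < 1 /\ exists a, inB a /\ zeroR a l /\ is_derive (fR a) l 0.

(* Main.v *)
Require Import Defs.
From Stdlib Require Import Reals ZArith Lra Lia Psatz Classical ClassicalEpsilon.
From Coquelicot Require Import Coquelicot.
Open Scope R_scope.

Fixpoint Dn (x : R) (n : nat) : R :=
  match n with O => 0 | S k => x * Dn x k + x ^ k end.

Lemma Dn_S x k : Dn x (S k) = INR (S k) * x ^ k.
Proof.
  induction k as [|k IH].
  - simpl. ring.
  - change (Dn x (S (S k))) with (x * Dn x (S k) + x ^ S k).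
    rewrite IH. rewrite !S_INR. simpl. ring.
Qed.

Lemma abs_pow_le x rho n : Rabs x <= rho -> Rabs (x ^ n) <= rho ^ n.
Proof.
  intros H. rewrite <- RPow_abs. apply pow_incr. split; [apply Rabs_pos|exact H].
Qed.

Lemma rec_bounds (x rho delta w u k : R) (p s : nat -> R) :
  0 < rho <= 1 -> Rabs x + delta <= rho -> 0 <= delta ->
  Rabs (w - x) <= delta -> Rabs (u - x) <= delta -> Rabs k <= delta * rho ->
  p 0%nat = 1 -> s 0%nat = 0 ->
  (forall n, p (S n) = w * p n + k * s n) ->
  (forall n, s (S n) = u * s n + p n) ->
  (forall n, Rabs (p n) <= rho ^ n) ->
  forall n, rho^2 * Rabs (p n - x^n) <= delta * (INR n + 1)^3 * rho^n /\
            rho^2 * Rabs (s n - Dn x n) <= delta * (INR n + 1)^3 * rho^n.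
Proof.
  intros Hr Hx Hd Hw Hu Hk p0 s0 pS sS Hp.
  assert (Hax : Rabs x <= rho) by lra.
  assert (Haw : Rabs w <= rho).
  { replace w with (x + (w - x)) by ring.
    eapply Rle_trans; [apply Rabs_triang|lra]. }
  assert (Hau : Rabs u <= rho).
  { replace u with (x + (u - x)) by ring.
    eapply Rle_trans; [apply Rabs_triang|lra]. }
  assert (Hrn : forall n, 0 <= rho ^ n) by (intro; apply pow_le; lra).
  assert (Hrn1 : forall n, rho ^ n <= 1).
  { intro n. rewrite <- (pow1 n). apply pow_incr. lra. }
  assert (C : forall n, rho * Rabs (s n) <= INR n * rho ^ n).
  { induction n as [|n IH].
    - rewrite s0, Rabs_R0. simpl. lra.
    - rewrite sS, S_INR. simpl.
      assert (H1 := Rabs_triang (u * s n) (p n)). rewrite Rabs_mult in H1.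
      assert (H2 := Hp n). assert (H3 := Rabs_pos (s n)). assert (H4 := Rabs_pos u).
      assert (H5: Rabs u * (rho * Rabs (s n)) <= rho * (INR n * rho ^ n)).
      { apply Rmult_le_compat; try lra. apply Rmult_le_pos; lra. }
      nra. }
  assert (CD : forall n, rho * Rabs (Dn x n) <= INR n * rho ^ n).
  { induction n as [|n IH].
    - simpl. rewrite Rabs_R0. lra.
    - change (Dn x (S n)) with (x * Dn x n + x ^ n). rewrite S_INR. simpl.
      assert (H1 := Rabs_triang (x * Dn x n) (x ^ n)). rewrite Rabs_mult in H1.
      assert (H2 := abs_pow_le x rho n Hax). assert (H3 := Rabs_pos (Dn x n)).
      assert (H4 := Rabs_pos x).
      assert (H5: Rabs x * (rho * Rabs (Dn x n)) <= rho * (INR n * rho ^ n)).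
      { apply Rmult_le_compat; try lra. apply Rmult_le_pos; lra. }
      nra. }
  assert (E : forall n, rho * Rabs (p n - x ^ n) <= delta * INR n ^ 2 * rho ^ n).
  { induction n as [|n IH].
    - rewrite p0. simpl. replace (1 - 1) with 0 by ring. rewrite Rabs_R0. lra.
    - rewrite pS, S_INR.
      replace (w * p n + k * s n - x ^ S n) with
        (w * (p n - x ^ n) + ((w - x) * x ^ n + k * s n)) by (simpl; ring).
      assert (H1 := Rabs_triang (w * (p n - x ^ n)) ((w - x) * x ^ n + k * s n)).
      assert (H1' := Rabs_triang ((w - x) * x ^ n) (k * s n)).
      repeat rewrite Rabs_mult in H1; repeat rewrite Rabs_mult in H1'.
      assert (H2 := abs_pow_le x rho n Hax).
      assert (H3 := Rabs_pos (p n - x ^ n)). assert (H4 := Rabs_pos w).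
      assert (H6 := Rabs_pos (s n)). assert (H7 := Rabs_pos k).
      assert (H8 := Rabs_pos (w - x)). assert (H9 := Rabs_pos (x ^ n)).
      assert (H5: Rabs w * (rho * Rabs (p n - x ^ n)) <= rho * (delta * INR n ^ 2 * rho ^ n)).
      { apply Rmult_le_compat; try lra. apply Rmult_le_pos; lra. }
      assert (H10: Rabs (w - x) * Rabs (x ^ n) <= delta * rho ^ n).
      { apply Rmult_le_compat; lra. }
      assert (H11: Rabs k * (rho * Rabs (s n)) <= delta * rho * (INR n * rho ^ n)).
      { assert (Cn := C n). apply Rmult_le_compat; try lra. apply Rmult_le_pos; lra. }
      assert (Hn := pos_INR n).
      assert (0 <= delta * rho ^ n) by (apply Rmult_le_pos; auto).
      assert (0 <= delta * rho ^ n * INR n) by (apply Rmult_le_pos; auto).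
      change (rho ^ S n) with (rho * rho ^ n).
      set (T := Rabs (w * (p n - x ^ n) + ((w - x) * x ^ n + k * s n))) in *.
      assert (rho * T <= rho * (Rabs w * Rabs (p n - x ^ n) + (Rabs (w - x) * Rabs (x ^ n) + Rabs k * Rabs (s n)))).
      { apply Rmult_le_compat_l; lra. }
      assert (delta * rho * (INR n * rho ^ n) = rho * (delta * rho ^ n * INR n)) by ring.
      assert (rho * (delta * INR n ^ 2 * rho ^ n) = rho * (delta * rho ^ n * INR n * INR n)) by ring.
      assert (Q: rho * T <= rho * (delta * rho ^ n * INR n * INR n + delta * rho ^ n + delta * rho ^ n * INR n)) by nra.
      eapply Rle_trans; [exact Q|]. 
      replace (delta * (INR n + 1) ^ 2 * (rho * rho ^ n)) with (rho * (delta * rho ^ n * INR n * INR n + 2 * (delta * rho ^ n * INR n) + delta * rho ^ n)) by ring.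
      apply Rmult_le_compat_l; lra. }
  assert (F : forall n, rho^2 * Rabs (s n - Dn x n) <= delta * INR n ^ 3 * rho ^ n).
  { induction n as [|n IH].
    - rewrite s0. simpl. replace (0 - 0) with 0 by ring. rewrite Rabs_R0. lra.
    - rewrite sS, S_INR.
      replace (u * s n + p n - Dn x (S n)) with
        (u * (s n - Dn x n) + ((u - x) * Dn x n + (p n - x ^ n))) by (simpl; ring).
      assert (H1 := Rabs_triang (u * (s n - Dn x n)) ((u - x) * Dn x n + (p n - x ^ n))).
      assert (H1' := Rabs_triang ((u - x) * Dn x n) (p n - x ^ n)).
      repeat rewrite Rabs_mult in H1; repeat rewrite Rabs_mult in H1'.
      assert (H3 := Rabs_pos (s n - Dn x n)). assert (H4 := Rabs_pos u).
      assert (H6 := Rabs_pos (Dn x n)). assert (H7 := Rabs_pos (p n - x ^ n)).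
      assert (H8 := Rabs_pos (u - x)).
      assert (H5: Rabs u * (rho^2 * Rabs (s n - Dn x n)) <= rho * (delta * INR n ^ 3 * rho ^ n)).
      { apply Rmult_le_compat; try lra. apply Rmult_le_pos; try lra. nra. }
      assert (H10: Rabs (u - x) * (rho * Rabs (Dn x n)) <= delta * (INR n * rho ^ n)).
      { apply Rmult_le_compat; try lra. apply Rmult_le_pos; lra. apply CD. }
      assert (H11 := E n).
      assert (Hn := pos_INR n).
      assert (0 <= delta * rho ^ n) by (apply Rmult_le_pos; auto).
      assert (0 <= delta * rho ^ n * INR n) by (apply Rmult_le_pos; auto).
      assert (0 <= delta * rho ^ n * INR n * INR n) by (apply Rmult_le_pos; auto).
      simpl. nra. }
  intro n. split.
  - assert (H := E n). assert (Hn := pos_INR n).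
    assert (H0 : rho^2 * Rabs (p n - x ^ n) <= rho * (delta * INR n ^ 2 * rho ^ n)).
    { replace (rho^2 * Rabs (p n - x ^ n)) with (rho * (rho * Rabs (p n - x ^ n))) by ring.
      apply Rmult_le_compat_l; lra. }
    eapply Rle_trans; [exact H0|].
    replace (rho * (delta * INR n ^ 2 * rho ^ n)) with ((delta * rho ^ n) * (rho * INR n ^ 2)) by ring.
    replace (delta * (INR n + 1) ^ 3 * rho ^ n) with ((delta * rho ^ n) * (INR n + 1) ^ 3) by ring.
    apply Rmult_le_compat_l. apply Rmult_le_pos; auto.
    assert (INR n ^ 2 <= (INR n + 1) ^ 3) by nra. nra.
  - assert (H := F n). assert (Hn := pos_INR n).
    eapply Rle_trans; [exact H|].
    replace (delta * INR n ^ 3 * rho ^ n) with ((delta * rho ^ n) * INR n ^ 3) by ring.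
    replace (delta * (INR n + 1) ^ 3 * rho ^ n) with ((delta * rho ^ n) * (INR n + 1) ^ 3) by ring.
    apply Rmult_le_compat_l. apply Rmult_le_pos; auto.
    apply pow_incr. lra.
Qed.

Section K.
Variable Q : (nat -> Z) -> R -> Prop.
Hypothesis Qmono : forall f e e', Q f e -> e <= e' -> Q f e'.
Hypothesis Qex : forall e, 0 < e -> exists f, inB f /\ Q f e.

Definition good (N : nat) (g : nat -> Z) : Prop :=
  forall e, 0 < e -> exists f, inB f /\ (forall n, (n < N)%nat -> f n = g n) /\ Q f e.

Definition upd (g : nat -> Z) (N : nat) (d : Z) : nat -> Z :=
  fun n => if Nat.eqb n N then d else g n.

Lemma digit f N : inB f -> f N = (-1)%Z \/ f N = 0%Z \/ f N = 1%Z.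
Proof.
  intros [H0 H1]. destruct N as [|N]. right; right; exact H0. apply H1. lia.
Qed.

Lemma good_step N g : good N g -> exists d, good (S N) (upd g N d).
Proof.
  intros Hg. apply NNPP. intro Hn.
  assert (Hd : forall d, exists e, 0 < e /\ forall f, inB f -> (forall n, (n < S N)%nat -> f n = upd g N d n) -> ~ Q f e).
  { intro d. assert (Hnd : ~ good (S N) (upd g N d)) by (intro H; apply Hn; exists d; exact H).
    unfold good in Hnd. apply not_all_ex_not in Hnd. destruct Hnd as [e He].
    exists e. split.
    - apply NNPP. intro H. apply He. intro H'. lra.
    - intros f Bf Ag Qf. apply He. intros _. exists f. auto. }
  destruct (Hd (-1)%Z) as [e1 [He1 H1]].
  destruct (Hd 0%Z) as [e2 [He2 H2]].
  destruct (Hd 1%Z) as [e3 [He3 H3]].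
  set (e := Rmin e1 (Rmin e2 e3)).
  assert (He : 0 < e) by (unfold e; repeat apply Rmin_pos; auto).
  destruct (Hg e He) as [f [Bf [Ag Qf]]].
  assert (Ag' : forall n, (n < S N)%nat -> f n = upd g N (f N) n).
  { intros n Hn'. unfold upd. destruct (Nat.eqb_spec n N). subst; auto. apply Ag. lia. }
  destruct (digit f N Bf) as [D|[D|D]]; rewrite D in Ag'.
  - apply (H1 f Bf Ag'). apply Qmono with e; auto. unfold e. apply Rmin_l.
  - apply (H2 f Bf Ag'). apply Qmono with e; auto. unfold e.
    eapply Rle_trans; [apply Rmin_r|apply Rmin_l].
  - apply (H3 f Bf Ag'). apply Qmono with e; auto. unfold e.
    eapply Rle_trans; [apply Rmin_r|apply Rmin_r].
Qed.

Definition nextd (N : nat) (g : nat -> Z) : Z :=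
  epsilon (inhabits 0%Z) (fun d => good (S N) (upd g N d)).

Fixpoint G (N : nat) : nat -> Z :=
  match N with O => fun _ => 0%Z | S M => upd (G M) M (nextd M (G M)) end.

Lemma G_good N : good N (G N).
Proof.
  induction N as [|N IH].
  - intros e He. destruct (Qex e He) as [f [Bf Qf]]. exists f. split; [exact Bf|split; [intros n Hn; lia|exact Qf]].
  - simpl. unfold nextd. apply epsilon_spec. apply good_step. exact IH.
Qed.

Lemma G_stable N n : (n < N)%nat -> G N n = G (S n) n.
Proof.
  induction N as [|M IH]; intros H. lia.
  destruct (Nat.eq_dec n M). subst. reflexivity.
  simpl. unfold upd at 1. destruct (Nat.eqb_spec n M). contradiction.
  apply IH. lia.
Qed.

Lemma koenig : exists c, inB c /\ forall N e, 0 < e ->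
  exists f, inB f /\ (forall n, (n < N)%nat -> f n = c n) /\ Q f e.
Proof.
  exists (fun n => G (S n) n).
  assert (Hg : forall N, good N (fun n => G (S n) n)).
  { intros N e He. destruct (G_good N e He) as [f [Bf [Ag Qf]]].
    exists f. split; [exact Bf|split; [|exact Qf]]. intros n Hn. rewrite Ag by auto. apply G_stable; auto. }
  split; [|exact Hg].
  assert (Hd : forall n, exists f, inB f /\ f n = G (S n) n).
  { intro n. destruct (Hg (S n) 1 Rlt_0_1) as [f [Bf [Ag _]]]. exists f; split; auto. }
  split.
  - destruct (Hd 0%nat) as [f [[B0 _] E]]. congruence.
  - intros n _. destruct (Hd n) as [f [Bf E]]. rewrite <- E. apply digit; auto.
Qed.
End K.

Lemma radius_gt (a : nat -> R) r : (forall n, Rabs (a n) <= 1) -> 0 <= r < 1 ->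
  Rbar_lt r (CV_radius a).
Proof.
  intros Ha Hr.
  set (r' := (1 + r) / 2).
  assert (H : Rbar_le r' (CV_radius a)).
  { destruct (CV_radius_bounded a) as [Hub _]. apply Hub.
    exists 1. intro n. rewrite Rabs_mult, <- RPow_abs.
    assert (0 <= Rabs r' ^ n <= 1).
    { split. apply pow_le, Rabs_pos. rewrite <- (pow1 n). apply pow_incr.
      split. apply Rabs_pos. unfold r'. rewrite Rabs_pos_eq; lra. }
    assert (H1 := Ha n). assert (H2 := Rabs_pos (a n)). nra. }
  destruct (CV_radius a) as [l| |]; simpl in *; auto.
  unfold r' in H. lra.
Qed.

Lemma pow_le_N (k : R) N n : 0 <= k <= 1 -> (N <= n)%nat -> k ^ n <= k ^ N.
Proof.
  intros Hk Hn. replace n with (N + (n - N))%nat by lia. rewrite pow_add.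
  assert (0 <= k ^ (n - N) <= 1).
  { split. apply pow_le; lra. rewrite <- (pow1 (n - N)). apply pow_incr. lra. }
  assert (0 <= k ^ N) by (apply pow_le; lra). nra.
Qed.

Lemma IZR_digit (z : Z) : (z = (-1)%Z \/ z = 0%Z \/ z = 1%Z) -> Rabs (IZR z) <= 1.
Proof.
  intros [H|[H|H]]; subst.
  rewrite Rabs_left; lra. rewrite Rabs_R0; lra. rewrite Rabs_R1; lra.
Qed.

Lemma inB_abs f n : inB f -> Rabs (IZR (f n)) <= 1.
Proof.
  intros [H0 H1]. apply IZR_digit. destruct n. right; right; auto. apply H1. lia.
Qed.

Section Lim.
Variable rho : R.
Hypothesis Hrho : 0 < rho < 1.
Let tau := (1 + rho) / 2.
Let kap := rho / tau.
Let b := fun n => Rabs (PS_derive (PS_derive (PS_derive (fun _ => 1))) n * tau ^ n).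

Lemma tau_pos : 0 < tau < 1.
Proof. unfold tau; lra. Qed.

Lemma kap_pos : 0 < kap < 1.
Proof. unfold kap, tau. split. apply Rdiv_lt_0_compat; lra.
  apply Rmult_lt_reg_r with ((1+rho)/2). lra. field_simplify; lra. Qed.

Lemma rho_split n : rho ^ n = kap ^ n * tau ^ n.
Proof. rewrite <- Rpow_mult_distr. f_equal. unfold kap, tau. field. lra. Qed.

Lemma b_ex : ex_series b.
Proof.
  unfold b. apply CV_disk_inside. rewrite !CV_radius_derive.
  apply radius_gt. intros; rewrite Rabs_R1; lra.
  assert (H := tau_pos). rewrite Rabs_pos_eq; lra.
Qed.

Lemma b_ge n : (INR n + 1) ^ 3 * tau ^ n <= b n.
Proof.
  unfold b, PS_derive. assert (H := tau_pos).
  assert (0 <= tau ^ n) by (apply pow_le; lra).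
  rewrite !S_INR. assert (Hn := pos_INR n).
  rewrite Rabs_pos_eq.
  2: { apply Rmult_le_pos; auto. repeat apply Rmult_le_pos; lra. }
  apply Rmult_le_compat_r; auto. nra.
Qed.

Let W := Series b.

Lemma SB (a : nat -> R) K : 0 <= K -> (forall n, Rabs (a n) <= K * b n) ->
  ex_series a /\ Rabs (Series a) <= K * W.
Proof.
  intros HK Ha.
  assert (Hex : ex_series (fun n => Rabs (a n))).
  { apply (ex_series_le (K := R_AbsRing) (V := R_CompleteNormedModule)) with (fun n => K * b n).
    intro n. change (norm (Rabs (a n))) with (Rabs (Rabs (a n))). rewrite Rabs_Rabsolu. apply Ha.
    apply (ex_series_scal_l (K := R_AbsRing) (V := R_NormedModule)). apply b_ex. }
  split. apply ex_series_Rabs; auto.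
  eapply Rle_trans. apply Series_Rabs; auto.
  unfold W. rewrite <- Series_scal_l. apply Series_le.
  intro n; split; [apply Rabs_pos|apply Ha].
  apply (ex_series_scal_l (K := R_AbsRing) (V := R_NormedModule)). apply b_ex.
Qed.

Lemma W_pos : 0 <= W.
Proof.
  destruct (SB (fun _ => 0) 1) as [_ H]. lra.
  intro n. rewrite Rabs_R0. assert (H := b_ge n).
  assert (0 <= (INR n + 1) ^ 3 * tau ^ n).
  { apply Rmult_le_pos; apply pow_le. assert (H' := pos_INR n); lra. assert (H' := tau_pos); lra. }
  lra.
  assert (H' := Rabs_pos (Series (fun _ : nat => 0))). lra.
Qed.

Lemma limit_zero (c : nat -> Z) (Y : nat -> R) :
  inB c ->
  (forall n, rho * Rabs (Y n) <= (INR n + 1) * rho ^ n) ->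
  (forall N e, 0 < e -> exists f, inB f /\ (forall n, (n < N)%nat -> f n = c n) /\
     exists Z, is_series (fun n => IZR (f n) * Z n) 0 /\
       forall n, rho^2 * Rabs (Z n - Y n) <= e * (INR n + 1)^3 * rho^n) ->
  is_series (fun n => IZR (c n) * Y n) 0.
Proof.
  intros Bc HY H.
  assert (Ht := tau_pos). assert (Hk := kap_pos).
  assert (HYb : forall n, rho * Rabs (Y n) <= b n).
  { intro n. eapply Rle_trans. apply HY. eapply Rle_trans; [|apply b_ge].
    assert (Hn := pos_INR n). rewrite rho_split.
    assert (0 <= kap ^ n <= 1).
    { split. apply pow_le; lra. rewrite <- (pow1 n). apply pow_incr. lra. }
    assert (0 <= tau ^ n) by (apply pow_le; lra).
    assert (INR n + 1 <= (INR n + 1) ^ 3) by nra.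
    assert (0 <= (INR n + 1) * tau ^ n) by nra.
    nra. }
  assert (HV : ex_series (fun n => IZR (c n) * Y n)).
  { apply (SB _ (/ rho)). left; apply Rinv_0_lt_compat; lra.
    intro n. rewrite Rabs_mult. assert (H1 := inB_abs c n Bc). assert (H2 := HYb n).
    assert (Rabs (Y n) <= / rho * b n).
    { apply Rmult_le_reg_l with rho. lra. rewrite <- Rmult_assoc, Rinv_r; lra. }
    assert (H3 := Rabs_pos (Y n)). assert (H4 := Rabs_pos (IZR (c n))). nra. }
  set (V := Series (fun n => IZR (c n) * Y n)).
  assert (Hbound : forall N e, 0 < e -> Rabs V <= 2 * kap ^ N / rho * W + e / rho^2 * W).
  { intros N e He. destruct (H N e He) as [f [Bf [Ag [Z [HZ HZb]]]]].
    set (a1 := fun n => (IZR (c n) - IZR (f n)) * Y n).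
    set (a2 := fun n => IZR (f n) * (Y n - Z n)).
    assert (HkN : 0 <= kap ^ N) by (apply pow_le; lra).
    destruct (SB a1 (2 * kap ^ N / rho)) as [E1 B1].
    { apply Rmult_le_pos. lra. left; apply Rinv_0_lt_compat; lra. }
    { intro n. unfold a1. destruct (lt_dec n N) as [Hn|Hn].
      - rewrite Ag by auto. replace (IZR (c n) - IZR (c n)) with 0 by ring.
        rewrite Rmult_0_l, Rabs_R0. apply Rmult_le_pos.
        apply Rmult_le_pos. lra. left; apply Rinv_0_lt_compat; lra.
        unfold b; apply Rabs_pos.
      - rewrite Rabs_mult.
        assert (Hcf : Rabs (IZR (c n) - IZR (f n)) <= 2).
        { eapply Rle_trans. apply Rabs_triang. rewrite Rabs_Ropp.
          assert (H1 := inB_abs c n Bc). assert (H2 := inB_abs f n Bf). lra. }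
        assert (HYn : rho * Rabs (Y n) <= kap ^ N * b n).
        { eapply Rle_trans. apply HY. rewrite rho_split.
          assert (Hp := pow_le_N kap N n ltac:(lra) ltac:(lia)).
          assert (0 <= kap ^ n) by (apply pow_le; lra).
          assert (0 <= tau ^ n) by (apply pow_le; lra).
          assert (Hn' := pos_INR n).
          assert (Hb := b_ge n).
          assert (INR n + 1 <= (INR n + 1) ^ 3) by nra.
          assert (0 <= (INR n + 1) * tau ^ n) by nra.
          assert ((INR n + 1) * (kap ^ n * tau ^ n) <= kap ^ N * ((INR n + 1) * tau ^ n)) by nra.
          assert (kap ^ N * ((INR n + 1) * tau ^ n) <= kap ^ N * b n).
          { apply Rmult_le_compat_l; auto. nra. }
          lra. }
        assert (Rabs (Y n) <= / rho * (kap ^ N * b n)).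
        { apply Rmult_le_reg_l with rho. lra. rewrite <- Rmult_assoc, Rinv_r; lra. }
        assert (H3 := Rabs_pos (Y n)). assert (H4 := Rabs_pos (IZR (c n) - IZR (f n))).
        unfold Rdiv.
        replace (2 * kap ^ N * / rho * b n) with (2 * (/ rho * (kap ^ N * b n))) by ring.
        apply Rmult_le_compat; auto. }
    destruct (SB a2 (e / rho ^ 2)) as [E2 B2].
    { apply Rmult_le_pos. lra. left; apply Rinv_0_lt_compat; nra. }
    { intro n. unfold a2. rewrite Rabs_mult.
      assert (H1 := inB_abs f n Bf). assert (H2 := HZb n).
      rewrite Rabs_minus_sym in H2.
      assert (Hb := b_ge n).
      assert (rho ^ n <= tau ^ n).
      { apply pow_incr. unfold tau; lra. }
      assert (Hn' := pos_INR n).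
      assert (0 <= (INR n + 1) ^ 3) by (apply pow_le; lra).
      assert (e * (INR n + 1) ^ 3 * rho ^ n <= e * b n).
      { rewrite Rmult_assoc. apply Rmult_le_compat_l. lra. eapply Rle_trans; [|exact Hb].
        apply Rmult_le_compat_l; auto. }
      assert (Rabs (Y n - Z n) <= e / rho ^ 2 * b n).
      { apply Rmult_le_reg_l with (rho ^ 2). nra. unfold Rdiv.
        replace (rho ^ 2 * (e * / rho ^ 2 * b n)) with (e * b n) by (field; lra). lra. }
      assert (H3b := Rabs_pos (Y n - Z n)). assert (H4b := Rabs_pos (IZR (f n))).
      assert (0 <= e / rho ^ 2 * b n).
      { apply Rmult_le_pos. apply Rmult_le_pos. lra. left; apply Rinv_0_lt_compat; nra. unfold b; apply Rabs_pos. }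
      nra. }
    assert (Hs : is_series (fun n => IZR (c n) * Y n) (Series a1 + Series a2 + 0)).
    { apply is_series_ext with (fun n => plus (plus (a1 n) (a2 n)) (IZR (f n) * Z n)).
      intro n. unfold a1, a2, plus; simpl. ring.
      apply (is_series_plus (K := R_AbsRing) (V := R_NormedModule)); auto.
      apply (is_series_plus (K := R_AbsRing) (V := R_NormedModule)); apply Series_correct; auto. }
    apply is_series_unique in Hs. fold V in Hs. rewrite Hs.
    rewrite Rplus_0_r. eapply Rle_trans. apply Rabs_triang. lra. }
  assert (HW := W_pos).
  assert (V0 : V = 0).
  { apply NNPP. intro Hne. assert (HVp : 0 < Rabs V) by (apply Rabs_pos_lt; auto).
    destruct (pow_lt_1_zero kap ltac:(rewrite Rabs_pos_eq; lra) (Rabs V * rho / (8 * (W + 1))))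
      as [N HN].
    { apply Rdiv_lt_0_compat. nra. lra. }
    assert (HN' := HN N (le_n N)). rewrite Rabs_pos_eq in HN' by (apply pow_le; lra).
    set (e := Rabs V * rho ^ 2 / (4 * (W + 1))).
    assert (He : 0 < e). { unfold e. apply Rdiv_lt_0_compat. apply Rmult_lt_0_compat; [lra|apply pow_lt; lra]. lra. }
    assert (Hb := Hbound N e He).
    assert (T1 : 2 * kap ^ N / rho * W <= Rabs V / 4).
    { assert (2 * kap ^ N / rho * W <= 2 * (Rabs V * rho / (8 * (W + 1))) / rho * W).
      { apply Rmult_le_compat_r; auto. unfold Rdiv. apply Rmult_le_compat_r.
        left; apply Rinv_0_lt_compat; lra. lra. }
      eapply Rle_trans; [exact H0|].
      replace (2 * (Rabs V * rho / (8 * (W + 1))) / rho * W) with (Rabs V / 4 * (W / (W + 1))) by (field; lra).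
      assert (W / (W + 1) <= 1).
      { apply Rmult_le_reg_l with (W + 1). lra. field_simplify; lra. }
      nra. }
    assert (T2 : e / rho ^ 2 * W <= Rabs V / 4).
    { unfold e. replace (Rabs V * rho ^ 2 / (4 * (W + 1)) / rho ^ 2 * W) with (Rabs V / 4 * (W / (W + 1))) by (field; lra).
      assert (W / (W + 1) <= 1).
      { apply Rmult_le_reg_l with (W + 1). lra. field_simplify; lra. }
      nra. }
    lra. }
  rewrite <- V0. apply Series_correct. exact HV.
Qed.
End Lim.

Lemma CD_bound x rho : Rabs x <= rho -> forall n, rho * Rabs (Dn x n) <= INR n * rho ^ n.
Proof.
  intros Hax. induction n as [|n IH].
  - simpl. rewrite Rabs_R0. lra.
  - change (Dn x (S n)) with (x * Dn x n + x ^ n). rewrite S_INR. simpl.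
    assert (H1 := Rabs_triang (x * Dn x n) (x ^ n)). rewrite Rabs_mult in H1.
    assert (H2 := abs_pow_le x rho n Hax). assert (H3 := Rabs_pos (Dn x n)).
    assert (H4 := Rabs_pos x).
    assert (H5: Rabs x * (rho * Rabs (Dn x n)) <= rho * (INR n * rho ^ n)).
    { apply Rmult_le_compat; try lra. apply Rmult_le_pos; lra. }
    nra.
Qed.

Definition Qx (x : R) (f : nat -> Z) (e : R) : Prop :=
  exists P S : nat -> R, is_series (fun n => IZR (f n) * P n) 0 /\
    is_series (fun n => IZR (f n) * S n) 0 /\
    forall n, ((1 + Rabs x) / 2) ^ 2 * Rabs (P n - x ^ n) <= e * (INR n + 1) ^ 3 * ((1 + Rabs x) / 2) ^ n /\
              ((1 + Rabs x) / 2) ^ 2 * Rabs (S n - Dn x n) <= e * (INR n + 1) ^ 3 * ((1 + Rabs x) / 2) ^ n.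

Lemma inO_of x : -1 < x < 1 -> (forall e, 0 < e -> exists f, inB f /\ Qx x f e) -> inO x.
Proof.
  intros Hx Hex.
  set (rho := (1 + Rabs x) / 2).
  assert (Hax : Rabs x < 1) by (apply Rabs_def1; lra).
  assert (Hr : 0 < rho < 1) by (unfold rho; assert (H := Rabs_pos x); lra).
  assert (Hmono : forall f e e', Qx x f e -> e <= e' -> Qx x f e').
  { intros f e e' [P [S [H1 [H2 H3]]]] Hee. exists P, S. split; auto. split; auto.
    intro n. destruct (H3 n) as [A1 A2]. fold rho in A1, A2 |- *.
    assert (0 <= (INR n + 1) ^ 3 * rho ^ n).
    { apply Rmult_le_pos; apply pow_le. assert (H' := pos_INR n); lra. lra. }
    split; nra. }
  destruct (koenig (Qx x) Hmono Hex) as [c [Bc Hc]].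
  assert (HV : is_series (fun n => IZR (c n) * x ^ n) 0).
  { apply (limit_zero rho Hr c (fun n => x ^ n) Bc).
    - intro n. assert (H := abs_pow_le x rho n ltac:(unfold rho; lra)).
      assert (0 <= rho ^ n) by (apply pow_le; lra). assert (H' := pos_INR n). nra.
    - intros N e He. destruct (Hc N e He) as [f [Bf [Ag [P [S [H1 [H2 H3]]]]]]].
      exists f. split; auto. split; auto. exists P. split; auto.
      intro n. apply (H3 n). }
  assert (HD : is_series (fun n => IZR (c n) * Dn x n) 0).
  { apply (limit_zero rho Hr c (Dn x) Bc).
    - intro n. assert (H := CD_bound x rho ltac:(unfold rho; lra) n).
      assert (0 <= rho ^ n) by (apply pow_le; lra). lra.
    - intros N e He. destruct (Hc N e He) as [f [Bf [Ag [P [S [H1 [H2 H3]]]]]]].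
      exists f. split; auto. split; auto. exists S. split; auto.
      intro n. apply (H3 n). }
  split; [exact Hx|]. exists c. split; auto. split; [exact HV|].
  unfold fR.
  assert (Hrad : Rbar_lt (Rabs x) (CV_radius (fun n => IZR (c n)))).
  { apply radius_gt. intro n. apply inB_abs; auto. split. apply Rabs_pos. lra. }
  assert (Hd := is_derive_PSeries _ x Hrad).
  replace 0 with (PSeries (PS_derive (fun n => IZR (c n))) x). exact Hd.
  unfold PSeries. apply is_series_unique.
  apply is_series_ext with (fun k => IZR (c (S k)) * Dn x (S k)).
  { intro k. rewrite Dn_S. unfold PS_derive. assert (E : IZR (c (S k)) * (INR (S k) * x ^ k) = INR (S k) * IZR (c (S k)) * x ^ k) by ring. exact E. }
  apply (is_series_incr_1 (K := R_AbsRing) (V := R_NormedModule) (fun n => IZR (c n) * Dn x n)).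
  match goal with |- is_series _ ?l => replace l with 0 end; [exact HD|].
  unfold plus; simpl. change (0 = 0 + IZR (c 0%nat) * 0). ring.
Qed.

Lemma sum_n_C (w : nat -> C) n :
  sum_n (G := C_AbelianMonoid) w n = (sum_n (fun k => fst (w k)) n, sum_n (fun k => snd (w k)) n).
Proof.
  induction n as [|n IH].
  - rewrite !sum_O. destruct (w 0%nat); reflexivity.
  - rewrite !sum_Sn, IH. reflexivity.
Qed.

Lemma C_series_comp (w : nat -> C) (l : C) :
  is_series (V := C_NormedModule) w l ->
  is_series (fun n => fst (w n)) (fst l) /\ is_series (fun n => snd (w n)) (snd l).
Proof.
  intro H. unfold is_series in *.
  pose proof (proj1 (@filterlim_locally nat C_UniformSpace eventually _ (sum_n (G := C_AbelianMonoid) w) l) H) as H'. clear H. rename H' into H.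
  split; apply filterlim_locally; intro eps;
    apply filter_imp with (2 := H eps); intros n [H1 H2];
    rewrite sum_n_C in H1, H2; assumption.
Qed.

Fixpoint ps (u v : R) (n : nat) : R * R :=
  match n with
  | O => (1, 0)
  | S k => (u * fst (ps u v k) - v ^ 2 * snd (ps u v k), u * snd (ps u v k) + fst (ps u v k))
  end.

Lemma pow_n_ps u v n :
  pow_n (K := C_Ring) ((u, v) : C) n = (fst (ps u v n), v * snd (ps u v n)).
Proof.
  induction n as [|n IH].
  - simpl. unfold one; simpl. unfold RtoC. f_equal. ring.
  - change (pow_n (K := C_Ring) ((u, v) : C) (S n)) with (mult (K := C_Ring) ((u, v) : C) (pow_n (K := C_Ring) ((u, v) : C) n)).
    rewrite IH. unfold mult; simpl. unfold Cmult; simpl. f_equal; ring.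
Qed.

Lemma ps_inv u v n : fst (ps u v n) ^ 2 + v ^ 2 * snd (ps u v n) ^ 2 = (u ^ 2 + v ^ 2) ^ n.
Proof.
  induction n as [|n IH]. simpl; ring. change ((u ^ 2 + v ^ 2) ^ S n) with ((u ^ 2 + v ^ 2) * (u ^ 2 + v ^ 2) ^ n). rewrite <- IH. cbn [ps fst snd]. ring.
Qed.

Lemma ps_bound u v rho n : Rabs u + Rabs v <= rho -> Rabs (fst (ps u v n)) <= rho ^ n.
Proof.
  intro H.
  assert (Hm : u ^ 2 + v ^ 2 <= rho * rho).
  { rewrite <- (pow2_abs u), <- (pow2_abs v).
    assert (H1 := Rabs_pos u). assert (H2 := Rabs_pos v). nra. }
  assert (Hp : fst (ps u v n) ^ 2 <= rho ^ n * rho ^ n).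
  { rewrite <- Rpow_mult_distr.
    assert (fst (ps u v n) ^ 2 <= (u ^ 2 + v ^ 2) ^ n).
    { rewrite <- ps_inv. assert (0 <= v ^ 2 * snd (ps u v n) ^ 2) by
        (apply Rmult_le_pos; apply pow2_ge_0). lra. }
    eapply Rle_trans; [eassumption|]. apply pow_incr. split; auto.
    assert (0 <= u ^ 2) by apply pow2_ge_0. assert (0 <= v ^ 2) by apply pow2_ge_0. lra. }
  rewrite <- (pow2_abs (fst (ps u v n))) in Hp.
  assert (0 <= rho) by (assert (H1 := Rabs_pos u); assert (H2 := Rabs_pos v); lra).
  assert (0 <= rho ^ n) by (apply pow_le; auto).
  assert (H3 := Rabs_pos (fst (ps u v n))).
  nra.
Qed.

Lemma part_i x : -1 < x < 1 ->
  (forall eps : R, 0 < eps -> exists z : C, inM z /\ Im z <> 0 /\ Cmod (z - RtoC x)%C < eps) ->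
  inO x.
Proof.
  intros Hx H. apply inO_of; auto. intros e He.
  assert (Hax : Rabs x < 1) by (apply Rabs_def1; lra).
  set (rho := (1 + Rabs x) / 2).
  set (eta := Rmin e ((1 - Rabs x) / 2) / 2).
  assert (Heta : 0 < eta).
  { unfold eta. apply Rdiv_lt_0_compat; [apply Rmin_pos; lra|lra]. }
  destruct (H eta Heta) as [[u v] [[_ [a [Ba Za]]] [Hv Hd]]].
  simpl in Hv.
  pose proof (Rmax_Cmod ((u, v) - RtoC x)%C) as Hm. simpl in Hm.
  assert (Hux : Rabs (u - x) < eta).
  { assert (H1 := Rmax_l (Rabs (u + - x)) (Rabs (v + - 0))). unfold Rminus. lra. }
  assert (Hvx : Rabs v < eta).
  { assert (H1 := Rmax_r (Rabs (u + - x)) (Rabs (v + - 0))).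
    replace (v + - 0) with v in H1, Hm by ring. lra. }
  set (delta := Rabs (u - x) + Rabs v).
  assert (Hde : delta <= e /\ Rabs x + delta <= rho).
  { assert (Rmin e ((1 - Rabs x) / 2) <= e) by apply Rmin_l.
    assert (Rmin e ((1 - Rabs x) / 2) <= (1 - Rabs x) / 2) by apply Rmin_r.
    unfold delta, rho. unfold eta in Hux, Hvx. lra. }
  assert (Hd0 : 0 <= delta) by (unfold delta; assert (H1 := Rabs_pos (u - x)); assert (H2 := Rabs_pos v); lra).
  exists a. split; auto.
  exists (fun n => fst (ps u v n)), (fun n => snd (ps u v n)).
  destruct (C_series_comp _ _ Za) as [Z1 Z2].
  split; [|split].
  - eapply is_series_ext; [|exact Z1].
    intro n. cbv beta. rewrite pow_n_ps. simpl.
    assert (E : IZR (a n) * fst (ps u v n) - 0 * (v * snd (ps u v n)) = IZR (a n) * fst (ps u v n)) by ring.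
    exact E.
  - assert (Z3 := is_series_scal_l (K := R_AbsRing) (V := R_NormedModule) (/ v) _ _ Z2).
    simpl in Z3.
    eapply is_series_ext; [|].
    2: { replace 0 with (scal (V := R_NormedModule) (/ v) 0). exact Z3.
         unfold scal; simpl. unfold mult; simpl. ring. }
    intro n. cbv beta. rewrite pow_n_ps. simpl. unfold scal; simpl. unfold mult; simpl.
    assert (E : / v * (IZR (a n) * (v * snd (ps u v n)) + 0 * fst (ps u v n)) = IZR (a n) * snd (ps u v n)) by (field; auto).
    exact E.
  - intro n.
    assert (Hr : 0 < rho <= 1) by (unfold rho; assert (H1 := Rabs_pos x); lra).
    assert (Hu : Rabs u + Rabs v <= rho).
    { replace u with (x + (u - x)) by ring.
      assert (H1 := Rabs_triang x (u - x)). unfold delta in Hde. lra. }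
    destruct (rec_bounds x rho delta u u (- v ^ 2) (fun n => fst (ps u v n)) (fun n => snd (ps u v n))
      Hr (proj2 Hde) Hd0 ltac:(unfold delta; assert (H1 := Rabs_pos v); lra)
      ltac:(unfold delta; assert (H1 := Rabs_pos v); lra)
      ltac:(rewrite Rabs_Ropp, Rabs_pos_eq by apply pow2_ge_0; rewrite <- pow2_abs; simpl; rewrite Rmult_1_r; apply Rmult_le_compat; [apply Rabs_pos|apply Rabs_pos|unfold delta; assert (H1 := Rabs_pos (u - x)); lra|assert (H3 := Rabs_pos u); lra])
      eq_refl eq_refl
      ltac:(intro k; simpl; ring) ltac:(intro k; simpl; ring)
      (fun k => ps_bound u v rho k Hu) n) as [B1 B2].
    assert (0 <= (INR n + 1) ^ 3 * rho ^ n).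
    { apply Rmult_le_pos; apply pow_le. assert (H' := pos_INR n); lra. lra. }
    fold rho. split; nra.
Qed.

Fixpoint sq (g l : R) (n : nat) : R :=
  match n with O => 0 | S k => g * sq g l k + l ^ k end.

Lemma sq_id g l n : (g - l) * sq g l n = g ^ n - l ^ n.
Proof.
  induction n as [|n IH]; simpl. ring.
  replace ((g - l) * (g * sq g l n + l ^ n)) with (g * ((g - l) * sq g l n) + (g - l) * l ^ n) by ring.
  rewrite IH. ring.
Qed.

Lemma part_ii l : -1 < l < 1 ->
  (forall eps : R, 0 < eps ->
        exists g la : R, inN g la /\ g <> la /\
          Rabs (g - l) < eps /\ Rabs (la - l) < eps) ->
  inO l.
Proof.
  intros Hx H. apply inO_of; auto. intros e He.
  assert (Hax : Rabs l < 1) by (apply Rabs_def1; lra).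
  set (rho := (1 + Rabs l) / 2).
  set (eta := Rmin e ((1 - Rabs l) / 2) / 2).
  assert (Heta : 0 < eta).
  { unfold eta. apply Rdiv_lt_0_compat; [apply Rmin_pos; lra|lra]. }
  destruct (H eta Heta) as [g [la [[_ [_ [a [Ba [Zg Zl]]]]] [Hne [Hg Hl]]]]].
  set (delta := Rabs (la - l) + Rabs (g - l)).
  assert (Hde : delta <= e /\ Rabs l + delta <= rho).
  { assert (Rmin e ((1 - Rabs l) / 2) <= e) by apply Rmin_l.
    assert (Rmin e ((1 - Rabs l) / 2) <= (1 - Rabs l) / 2) by apply Rmin_r.
    unfold delta, rho. unfold eta in Hg, Hl. lra. }
  assert (Hd0 : 0 <= delta) by (unfold delta; assert (H1 := Rabs_pos (la - l)); assert (H2 := Rabs_pos (g - l)); lra).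
  exists a. split; auto.
  exists (fun n => la ^ n), (sq g la).
  split; [exact Zl|split].
  - assert (Z3 := is_series_minus (K := R_AbsRing) (V := R_NormedModule) _ _ _ _ Zg Zl).
    assert (Z4 := is_series_scal_l (K := R_AbsRing) (V := R_NormedModule) (/ (g - la)) _ _ Z3).
    eapply is_series_ext; [|].
    2: { replace 0 with (scal (V := R_NormedModule) (/ (g - la)) (plus 0 (opp 0))). exact Z4.
         unfold scal, plus, opp; simpl. unfold mult, plus, opp; simpl. ring. }
    intro n. unfold scal, plus, opp; simpl. unfold mult, plus, opp; simpl.
    assert (Hgl : g - la <> 0) by lra.
    assert (E : / (g - la) * (IZR (a n) * g ^ n + - (IZR (a n) * la ^ n)) = IZR (a n) * sq g la n).
    { rewrite <- (Rmult_1_l (sq g la n)). rewrite <- (Rinv_l (g - la)) by auto.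
      rewrite Rmult_assoc, sq_id. ring. }
    exact E.
  - intro n.
    assert (Hr : 0 < rho <= 1) by (unfold rho; assert (H1 := Rabs_pos l); lra).
    assert (Hlr : Rabs la <= rho).
    { replace la with (l + (la - l)) by ring.
      assert (H1 := Rabs_triang l (la - l)). unfold delta in Hde.
      assert (H2 := Rabs_pos (g - l)). lra. }
    destruct (rec_bounds l rho delta la g 0 (fun n => la ^ n) (sq g la)
      Hr (proj2 Hde) Hd0 ltac:(unfold delta; assert (H1 := Rabs_pos (g - l)); lra)
      ltac:(unfold delta; assert (H1 := Rabs_pos (la - l)); lra)
      ltac:(rewrite Rabs_R0; apply Rmult_le_pos; lra)
      eq_refl eq_refl
      ltac:(intro k; simpl; ring) ltac:(intro k; reflexivity)
      (fun k => abs_pow_le la rho k Hlr) n) as [B1 B2].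
    assert (0 <= (INR n + 1) ^ 3 * rho ^ n).
    { apply Rmult_le_pos; apply pow_le. assert (H' := pos_INR n); lra. lra. }
    fold rho. split; nra.
Qed.

Theorem lemma2p8 :
  (forall x : R, -1 < x < 1 ->
     (forall eps : R, 0 < eps ->
        exists z : C, inM z /\ Im z <> 0 /\ Cmod (z - RtoC x)%C < eps) ->
     inO x)
  /\
  (forall l : R, -1 < l < 1 ->
     (forall eps : R, 0 < eps ->
        exists g la : R, inN g la /\ g <> la /\
          Rabs (g - l) < eps /\ Rabs (la - l) < eps) ->
     inO l).
Proof. split; [exact part_i|exact part_ii]. Qed.
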